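(* Let $A_1,A_2$ be two stochastic undirected $n\times n$ matrices. Then the switched system $x(t+1)=A_{\sigma(t)}x(t)$, $x(0)=x_0$, converges to a multiple of $\mathbf{1}$ for every $x_0\in\mathbb{R}^n$ and every sequence $\sigma:\mathbb{N}\to\{1,2\}$ if and only if it converges to a multiple of $\mathbf{1}$ for every $x_0\in\mathbb{R}^n$ under each of the three sequences $\sigma_1=1,1,1,\dots$, $\sigma_2=2,2,2,\dots$ and $\sigma_3=1,2,1,2,\dots$.
   Context: $\mathbf{1}=(1,\dots,1)^\top$. A stochastic matrix is a nonnegative matrix whose rows sum to $1$. A nonnegative matrix $A=(a_{ij})$ is undirected if $a_{ij}>0 \Leftrightarrow a_{ji}>0$ for all $i,j$. *)

(* Defs.v *)
From HB Require Import structures.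
From mathcomp Require Import all_boot all_order all_algebra.
From mathcomp Require Import all_classical all_reals topology normedtype sequences.
Set Implicit Arguments. Unset Strict Implicit. Unset Printing Implicit Defensive.
Import Order.TTheory GRing.Theory Num.Theory.
Local Open Scope classical_set_scope.
Local Open Scope ring_scope.

Definition stochastic (R : realType) (n : nat) (A : 'M[R]_n) : Prop :=
  (forall i j, 0 <= A i j) /\ (forall i, \sum_(j < n) A i j = 1).

Definition undirected (R : realType) (n : nat) (A : 'M[R]_n) : Prop :=
  forall i j, 0 < A i j <-> 0 < A j i.

(* switching signal sigma : nat -> bool ; false stands for index 1, true for 2 *)
Definition select (R : realType) (n : nat) (A1 A2 : 'M[R]_n) (b : bool) : 'M[R]_n :=
  if b then A2 else A1.

Fixpoint traj (R : realType) (n : nat) (A1 A2 : 'M[R]_n) (sigma : nat -> bool)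
  (x0 : 'cV[R]_n) (t : nat) : 'cV[R]_n :=
  match t with
  | 0 => x0
  | t'.+1 => select A1 A2 (sigma t') *m traj A1 A2 sigma x0 t'
  end.

Definition conv_to_consensus (R : realType) (n : nat) (x : nat -> 'cV[R]_n) : Prop :=
  exists c : R, forall i : 'I_n, (fun t => x t i ord0) @ \oo --> (c : R^o).

Definition conv_all_x0 (R : realType) (n : nat) (A1 A2 : 'M[R]_n)
  (sigma : nat -> bool) : Prop :=
  forall x0 : 'cV[R]_n, conv_to_consensus (traj A1 A2 sigma x0).

Definition sigma1 : nat -> bool := fun _ => false.
Definition sigma2 : nat -> bool := fun _ => true.
Definition sigma3 : nat -> bool := fun t => odd t.

(* Main.v *)
Require Import Defs.
From HB Require Import structures.
From mathcomp Require Import all_boot all_order all_algebra.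
From mathcomp Require Import all_classical all_reals topology normedtype sequences.
From mathcomp Require Import zify ring lra.
Set Implicit Arguments. Unset Strict Implicit. Unset Printing Implicit Defensive.
Import Order.TTheory GRing.Theory Num.Theory.
Import numFieldNormedType.Exports.
Local Open Scope classical_set_scope.
Local Open Scope ring_scope.

Section Supp.
Variables (R : realType) (n : nat).
Implicit Types X Y Z : 'M[R]_n.

Definition nonneg X := forall i j, 0 <= X i j.
Definition le_supp X Y := forall i j, 0 < X i j -> 0 < Y i j.
Definition rowpos X := forall i, exists j, 0 < X i j.
Definition pcol X := exists j, forall i, 0 < X i j.
Definition mpow X m := iter m (mulmx X) 1%:M.
Definition good X := exists m, pcol (mpow X m).

Lemma stoch_nonneg X : stochastic X -> nonneg X.
Proof. by case. Qed.

Lemma stoch_mul X Y : stochastic X -> stochastic Y -> stochastic (X *m Y).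
Proof.
move=> [X0 X1] [Y0 Y1]; split.
  by move=> i j; rewrite mxE; apply: sumr_ge0 => k _; apply: mulr_ge0.
move=> i; under eq_bigr do rewrite mxE.
rewrite exchange_big /=.
under eq_bigr do rewrite -mulr_sumr Y1 mulr1.
exact: X1.
Qed.

Lemma stoch1 : stochastic (1%:M : 'M[R]_n).
Proof.
split; first by move=> i j; rewrite mxE ler0n.
move=> i; rewrite (bigD1 i) //= big1 ?addr0; first by rewrite mxE eqxx.
by move=> j /negPf ji; rewrite mxE eq_sym ji.
Qed.

Lemma stoch_rowpos X : stochastic X -> rowpos X.
Proof.
move=> [X0 X1] i; case: (pickP (fun j => 0 < X i j)) => [j Hj|H]; first by exists j.
have := X1 i; rewrite big1 => [/eqP|j _]; first by rewrite eq_sym oner_eq0.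
by apply/eqP; rewrite eq_le X0 andbT leNgt H.
Qed.

Lemma mul_pos X Y i k j : nonneg X -> nonneg Y -> 0 < X i k -> 0 < Y k j ->
  0 < (X *m Y) i j.
Proof.
move=> X0 Y0 Xp Yp; rewrite mxE (bigD1 k) //=.
apply: (lt_le_trans (mulr_gt0 Xp Yp)); rewrite lerDl.
by apply: sumr_ge0 => l _; apply: mulr_ge0.
Qed.

Lemma pos_mul X Y i j : nonneg X -> nonneg Y -> 0 < (X *m Y) i j ->
  exists k, 0 < X i k /\ 0 < Y k j.
Proof.
move=> X0 Y0; case: (pickP (fun k => (0 < X i k) && (0 < Y k j))) => [k /andP[] *|H].
  by exists k.
rewrite mxE big1 ?ltxx // => k _; have := H k.
rewrite !lt0r X0 Y0 !andbT => /negbT; rewrite negb_and !negbK.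
by case/orP => /eqP ->; rewrite ?mul0r ?mulr0.
Qed.

Lemma nonneg_mul X Y : nonneg X -> nonneg Y -> nonneg (X *m Y).
Proof. by move=> X0 Y0 i j; rewrite mxE; apply: sumr_ge0 => k _; apply: mulr_ge0. Qed.

Lemma le_supp_mul X X' Y Y' : nonneg X -> nonneg Y -> nonneg X' -> nonneg Y' ->
  le_supp X X' -> le_supp Y Y' -> le_supp (X *m Y) (X' *m Y').
Proof.
move=> X0 Y0 X'0 Y'0 hX hY i j /(pos_mul X0 Y0) [k [h1 h2]].
exact: (mul_pos X'0 Y'0 (hX _ _ h1) (hY _ _ h2)).
Qed.

Lemma le_supp_refl X : le_supp X X. Proof. by []. Qed.

Lemma le_supp_trans X Y Z : le_supp X Y -> le_supp Y Z -> le_supp X Z.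
Proof. by move=> h1 h2 i j /h1 /h2. Qed.

Lemma one_le_sq X : nonneg X -> undirected X -> rowpos X -> le_supp 1%:M (X *m X).
Proof.
move=> X0 Xu Xr i j; rewrite mxE; case: eqP => [<- _|]; last by rewrite ltxx.
have [k Hk] := Xr i; apply: (mul_pos X0 X0 Hk); exact/Xu.
Qed.

Lemma pcol_mulr X Y : nonneg X -> nonneg Y -> pcol X -> rowpos Y -> pcol (X *m Y).
Proof.
move=> X0 Y0 [j Hj] Yr; have [l Hl] := Yr j; exists l => i.
exact: (mul_pos X0 Y0 (Hj i) Hl).
Qed.

Lemma pcol_mull X Y : nonneg X -> nonneg Y -> rowpos X -> pcol Y -> pcol (X *m Y).
Proof.
move=> X0 Y0 Xr [j Hj]; exists j => i; have [k Hk] := Xr i.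
exact: (mul_pos X0 Y0 Hk (Hj k)).
Qed.

Lemma pcol_le X Y : le_supp X Y -> pcol X -> pcol Y.
Proof. by move=> h [j Hj]; exists j => i; apply: h. Qed.

Lemma mpowS X m : mpow X m.+1 = X *m mpow X m. Proof. by []. Qed.

Lemma mpowD X a b : mpow X (a + b) = mpow X a *m mpow X b.
Proof. elim: a => [|a IH]; first by rewrite mul1mx. by rewrite addSn !mpowS IH mulmxA. Qed.

Lemma mpow_stoch X m : stochastic X -> stochastic (mpow X m).
Proof. move=> h; elim: m => [|m IH]; [exact: stoch1|exact: stoch_mul]. Qed.

Lemma mpow_le X Y m : nonneg X -> nonneg Y -> le_supp X Y -> le_supp (mpow X m) (mpow Y m).
Proof.
move=> X0 Y0 h; have nn Z k : nonneg Z -> nonneg (mpow Z k).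
  move=> Z0; elim: k => [|k IH]; first by move=> i j; rewrite mxE ler0n.
  exact: nonneg_mul.
elim: m => [|m IH]; first exact: le_supp_refl.
by apply: le_supp_mul => //; apply: nn.
Qed.

Lemma mpow_mul X k m : mpow (mpow X k) m = mpow X (k * m).
Proof. elim: m => [|m IH]; first by rewrite muln0. by rewrite mpowS IH mulnS mpowD. Qed.

Lemma mpow_conj X Y m : X *m mpow (Y *m X) m *m Y = mpow (X *m Y) m.+1.
Proof.
elim: m => [|m IH]; first by rewrite mulmx1 mpowS mulmx1.
by rewrite mpowS (mpowS (X *m Y)) -IH !mulmxA.
Qed.

Lemma good_le X Y : nonneg X -> nonneg Y -> le_supp X Y -> good X -> good Y.
Proof. by move=> X0 Y0 h [m hm]; exists m; apply: pcol_le hm; apply: mpow_le. Qed.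

Lemma good_pow X k : stochastic X -> (0 < k)%N -> good X -> good (mpow X k).
Proof.
move=> hX k0 [m hm]; exists m; rewrite mpow_mul.
have -> : (k * m = m + k.-1 * m)%N by rewrite -mulSn prednK.
rewrite mpowD; apply: pcol_mulr => //; try exact/stoch_nonneg/mpow_stoch.
exact/stoch_rowpos/mpow_stoch.
Qed.

Lemma good_conj X Y : stochastic X -> stochastic Y -> good (Y *m X) -> good (X *m Y).
Proof.
move=> hX hY [m hm]; exists m.+1; rewrite -mpow_conj.
have hYX := mpow_stoch m (stoch_mul hY hX).
have h1 := stoch_mul hX hYX.
apply: pcol_mulr; [exact: stoch_nonneg h1|exact: stoch_nonneg hY| |exact: stoch_rowpos].
apply: pcol_mull; [exact: stoch_nonneg hX|exact: stoch_nonneg hYX|exact: stoch_rowpos|exact: hm].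
Qed.

End Supp.
Section Words.
Variables (R : realType) (n : nat) (A1 A2 : 'M[R]_n).
Hypotheses (s1 : stochastic A1) (s2 : stochastic A2)
  (u1 : undirected A1) (u2 : undirected A2).

Definition sel b := select A1 A2 b.
Definition Mw (w : seq bool) := foldr (fun b X => sel b *m X) 1%:M w.
Definition altE (c : bool) k := flatten (nseq k [:: c; ~~ c]).

Lemma sel_stoch b : stochastic (sel b). Proof. by case: b. Qed.
Lemma sel_und b : undirected (sel b). Proof. by case: b. Qed.

Lemma Mw_cat u v : Mw (u ++ v) = Mw u *m Mw v.
Proof. elim: u => [|b u IH] /=; [by rewrite mul1mx | by rewrite IH mulmxA]. Qed.

Lemma Mw_stoch w : stochastic (Mw w).
Proof. elim: w => [|b w IH] /=; [exact: stoch1 | exact: stoch_mul (sel_stoch b) IH]. Qed.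

Lemma altE_rcons c k : altE c k.+1 = altE c k ++ [:: c; ~~ c].
Proof.
elim: k => [|k IH] //=.
by rewrite /altE /= in IH *; rewrite IH.
Qed.

Lemma Mw_alt c k : Mw (altE c k) = mpow (sel c *m sel (~~ c)) k.
Proof. elim: k => [|k IH] //=; by rewrite /altE /= in IH *; rewrite IH mulmxA. Qed.

Lemma classify c w :
  (exists u v d, c :: w = u ++ [:: d, d & v]) \/ (w = [::]) \/
  (exists k, (0 < k)%N /\ c :: w = altE c k) \/
  (exists k, (0 < k)%N /\ w = altE (~~ c) k).
Proof.
elim: w c => [|d w IH] c; first by right; left.
case: (IH d) => [[u [v [e H]]]|[H|[[k [k0 H]]|[k [k0 H]]]]].
- by left; exists (c :: u), v, e; rewrite H.
- case: (eqVneq d c) => [->|dc]; first by left; exists [::], w, c.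
  right; right; left; exists 1%N; split => //; rewrite H.
  by clear H IH; move: dc; case: c; case: d.
- case: (eqVneq d c) => [->|dc]; first by left; exists [::], w, c.
  right; right; right; exists k; split => //; rewrite H.
  by clear H IH; move: dc; case: c; case: d.
- case: (eqVneq d c) => [->|dc]; first by left; exists [::], w, c.
  right; right; left; exists k.+1; split => //; rewrite H.
  by clear H IH; move: dc; case: c; case: d.
Qed.

Hypotheses (g1 : good A1) (g2 : good A2) (g21 : good (A2 *m A1)).

Lemma good_sel c : good (sel c). Proof. by case: c. Qed.

Lemma good_alt c : good (sel c *m sel (~~ c)).
Proof. case: c => /=; first exact: g21. exact: good_conj. Qed.

Lemma good_word_aux N : forall w, (size w < N)%N -> w != [::] -> good (Mw w).
Proof.
elim: N => [|N IH] [|c w] //= Hs _.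
case: (classify c w) => [[u [v [d H]]]|[H|[[k [k0 H]]|[k [k0 H]]]]].
- rewrite -[_ *m _]/(Mw (c :: w)) H Mw_cat /=.
  case E: (u ++ v) => [|e l].
    move/eqP: E; rewrite -size_eq0 size_cat addn_eq0 !size_eq0 => /andP[/eqP -> /eqP ->].
    rewrite mul1mx; exact: (good_pow (sel_stoch d) (isT : (0 < 2)%N) (good_sel d)).
  have hs : (size (u ++ v) < N)%N.
    move: Hs; rewrite -[size w]/(size (c :: w)).-1 H !size_cat /=; rewrite ltnS.
    by move/(leq_trans _); apply; rewrite !addnS ltnS leqnSn.
  have := IH _ hs; rewrite E => /(_ isT); rewrite -E Mw_cat.
  have nu := stoch_nonneg (Mw_stoch u); have nv := stoch_nonneg (Mw_stoch v).
  have nd := stoch_nonneg (sel_stoch d).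
  apply: good_le.
  + exact: nonneg_mul.
  + by apply: nonneg_mul => //; apply: nonneg_mul => //; apply: nonneg_mul.
  apply: le_supp_mul => //; first by apply: nonneg_mul => //; apply: nonneg_mul.
  rewrite mulmxA -{1}(mul1mx (Mw v)).
  apply: le_supp_mul => //; first exact: stoch_nonneg (stoch1 _ _).
    exact: nonneg_mul.
  exact: one_le_sq (sel_und d) (stoch_rowpos (sel_stoch d)).
- by subst w; rewrite mulmx1; apply: good_sel.
- rewrite -[_ *m _]/(Mw (c :: w)) H Mw_alt.
  exact: good_pow (stoch_mul (sel_stoch _) (sel_stoch _)) k0 (good_alt c).
- case: k k0 H => [|k] // _ H; subst w.
  rewrite altE_rcons negbK.
  apply: good_conj; [exact: sel_stoch|exact: Mw_stoch|].
  have -> : Mw (altE (~~ c) k ++ [:: ~~ c; c]) *m sel c =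
      Mw (altE (~~ c) k ++ [:: ~~ c]) *m (sel c *m (sel c *m 1%:M)).
    by rewrite !Mw_cat /= !mulmx1 !mulmxA.
  have hs : (size (altE (~~ c) k ++ [:: ~~ c]) < N)%N.
    by move: Hs; rewrite altE_rcons !size_cat /=; lia.
  have := IH _ hs; rewrite -size_eq0 size_cat addn1 => /(_ isT).
  set M := Mw _.
  have nM := stoch_nonneg (Mw_stoch (altE (~~ c) k ++ [:: ~~ c])).
  have nd := stoch_nonneg (sel_stoch c).
  have ndd : nonneg (sel c *m (sel c *m 1%:M)).
    by rewrite mulmx1; apply: nonneg_mul.
  apply: good_le => //; first by apply: nonneg_mul.
  rewrite -{1}(mulmx1 M); apply: le_supp_mul => //; first exact: stoch_nonneg (stoch1 _ _).
  rewrite mulmx1; exact: one_le_sq (sel_und c) (stoch_rowpos (sel_stoch c)).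
Qed.

Lemma good_word w : w != [::] -> good (Mw w).
Proof. exact: good_word_aux (ltnSn _). Qed.

End Words.
Section Windows.
Variables (R : realType) (n : nat) (A1 A2 : 'M[R]_n).
Hypotheses (s1 : stochastic A1) (s2 : stochastic A2)
  (u1 : undirected A1) (u2 : undirected A2)
  (g1 : good A1) (g2 : good A2) (g21 : good (A2 *m A1)).
Variable sigma : nat -> bool.

Fixpoint mkword s L := if L is L'.+1 then sigma (s + L') :: mkword s L' else [::].
Definition win s L := Mw A1 A2 (mkword s L).

Lemma mkword_add s a b : mkword s (a + b) = mkword (s + a) b ++ mkword s a.
Proof. elim: b => [|b IH]; first by rewrite addn0. by rewrite addnS /= IH addnA. Qed.

Lemma traj_win x0 s L : traj A1 A2 sigma x0 (s + L) = win s L *m traj A1 A2 sigma x0 s.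
Proof.
elim: L => [|L IH]; first by rewrite addn0 /win /= mul1mx.
by rewrite addnS /= IH /win /= mulmxA.
Qed.

Definition supp (X : 'M[R]_n) : 'M[bool]_n := \matrix_(i, j) (0 < X i j).

Lemma supp_le X Y : supp X = supp Y -> le_supp X Y.
Proof.
move=> E i j h; have := congr1 (fun M : 'M[bool]_n => M i j) E; rewrite !mxE h.
by move=> <-.
Qed.

Lemma supp_eq X Y : le_supp X Y -> le_supp Y X -> supp X = supp Y.
Proof.
move=> h1 h2; apply/matrixP => i j; rewrite !mxE.
by apply/idP/idP; [apply: h1|apply: h2].
Qed.

Lemma supp_mul Z X Y : nonneg Z -> nonneg X -> nonneg Y -> supp X = supp Y ->
  supp (Z *m X) = supp (Z *m Y).
Proof.
move=> Z0 X0 Y0 E; apply: supp_eq; apply: le_supp_mul => //.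
- exact: supp_le.
- by apply: supp_le.
Qed.

Lemma win_stoch s L : stochastic (win s L).
Proof. exact: Mw_stoch. Qed.

Lemma win_pcol s : pcol (win s #|{: 'M[bool]_n}|).
Proof.
set K := #|{: 'M[bool]_n}|.
pose f (l : 'I_K.+1) := supp (win s l).
have : ~~ injectiveb f.
  apply/negP => /injectiveP /leq_card; rewrite card_ord.
  by rewrite -/K ltnn.
case/dinjectivePn => l1 _ [l2]; rewrite !inE andbT => ne E.
have [a [d [d0 [ad [Ea Ed]]]]] : exists a d, (0 < d)%N /\ (a + d <= K)%N /\
    supp (win s a) = supp (win s (a + d)) /\ True.
  case: (ltngtP l1 l2) => h.
  - exists l1, (l2 - l1)%N; rewrite subn_gt0 h subnKC ?(ltnW h) //.
    by rewrite -ltnS ltn_ord; split.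
  - exists l2, (l1 - l2)%N; rewrite subn_gt0 h subnKC ?(ltnW h) //.
    by rewrite -ltnS ltn_ord; split.
  - by move: ne; rewrite (val_inj h) eqxx.
clear Ed f E ne l1 l2.
set W := win s a.
have nW : nonneg W := stoch_nonneg (win_stoch s a).
set Q := Mw A1 A2 (mkword (s + a) d).
have sQ : stochastic Q := Mw_stoch s1 s2 _.
have EQ : win s (a + d) = Q *m W by rewrite /win mkword_add Mw_cat.
have key m : supp W = supp (mpow Q m *m W).
  elim: m => [|m IH]; first by rewrite mul1mx.
  rewrite Ea EQ mpowS -mulmxA.
  apply: supp_mul; first exact: stoch_nonneg sQ.
  - exact: nW.
  - apply: nonneg_mul => //; exact/stoch_nonneg/mpow_stoch.
  exact: IH.
have [m hm] : good Q.
  by apply: good_word => //; rewrite -(prednK d0).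
have pW : pcol W.
  have := key m => /esym /supp_le /pcol_le; apply.
  apply: pcol_mulr => //; first exact/stoch_nonneg/mpow_stoch.
  exact/stoch_rowpos/win_stoch.
have -> : K = (a + (K - a))%N by rewrite subnKC // (leq_trans (leq_addr _ _) ad).
rewrite /win mkword_add Mw_cat.
apply: pcol_mull => //; [exact: stoch_nonneg (Mw_stoch s1 s2 _) | exact: stoch_rowpos (Mw_stoch s1 s2 _)].
Qed.

End Windows.
Section Extract.
Variables (R : realType) (n : nat).

Lemma extract (i0 : 'I_n) (P : nat -> 'M[R]_n) : (forall t, stochastic (P t)) ->
  (forall j, exists c : R, forall i, (fun t => P t i j) @ \oo --> (c : R^o)) ->
  exists t, pcol (P t).
Proof.
move=> sP hc.
have [[j [c [Hc c0]]]|H] := pselect (exists j, exists c : R,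
    (forall i, (fun t => P t i j) @ \oo --> (c : R^o)) /\ 0 < c).
  have : \forall t \near \oo, forall i, 0 < P t i j.
    apply: filter_forall => i; exact: cvgr_gt (Hc i) _ c0.
  by case/filter_ex => t ht; exists t, j.
have : \forall t \near \oo, forall j, P t i0 j < (n.+1%:R)^-1.
  apply: filter_forall => j; have [c Hc] := hc j.
  apply: cvgr_lt (Hc i0) _ _.
  rewrite ltNge; apply/negP => cle; apply: H; exists j, c; split => //.
  by apply: lt_le_trans cle; rewrite invr_gt0 ltr0n.
case/filter_ex => t ht.
have := (sP t).2 i0.
have : \sum_(j < n) P t i0 j <= \sum_(j < n) (n.+1%:R)^-1 :> R.
  by apply: ler_sum => j _; apply: ltW.
rewrite sumr_const card_ord => h1 h2; move: h1; rewrite h2.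
rewrite -[_ *+ n]mulr_natl ler_pdivlMr ?ltr0n // mul1r ler_nat ltnn //.
Qed.

Definition ej (j : 'I_n) : 'cV[R]_n := \matrix_(i, k) (i == j)%:R.

Lemma mul_ej (X : 'M[R]_n) i j : (X *m ej j) i ord0 = X i j.
Proof.
rewrite mxE (bigD1 j) //= big1 ?addr0; first by rewrite mxE eqxx mulr1.
by move=> k /negPf kj; rewrite mxE kj mulr0.
Qed.

End Extract.

Section Extract2.
Variables (R : realType) (n : nat) (A1 A2 : 'M[R]_n).
Hypotheses (s1 : stochastic A1) (s2 : stochastic A2).

Lemma conv_pcol sigma (i0 : 'I_n) : conv_all_x0 A1 A2 sigma ->
  exists t, pcol (win A1 A2 sigma 0 t).
Proof.
move=> hc; apply: (@extract _ _ i0 (fun t => win A1 A2 sigma 0 t)) => [t|j]; first exact: Mw_stoch.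
have [c Hc] := hc (@ej R n j); exists c => i.
have -> : (fun t => win A1 A2 sigma 0 t i j) =
          (fun t => traj A1 A2 sigma (@ej R n j) t i ord0).
  by apply: funext => t; rewrite -[t]add0n traj_win /= mul_ej.
exact: Hc.
Qed.

Lemma pcol_winS sigma s t : pcol (win A1 A2 sigma s t) -> pcol (win A1 A2 sigma s t.+1).
Proof.
move=> h; rewrite /win /=; apply: pcol_mull => //.
- exact/stoch_nonneg/sel_stoch.
- exact/stoch_nonneg/Mw_stoch.
- exact/stoch_rowpos/sel_stoch.
Qed.

Lemma win_s1 t : win A1 A2 sigma1 0 t = mpow A1 t.
Proof. elim: t => [|t IH] //; rewrite /win /= -/(win A1 A2 sigma1 0 t) IH //. Qed.

Lemma win_s2 t : win A1 A2 sigma2 0 t = mpow A2 t.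
Proof. elim: t => [|t IH] //; rewrite /win /= -/(win A1 A2 sigma2 0 t) IH //. Qed.

Lemma win_s3 t : win A1 A2 sigma3 0 t.*2 = mpow (A2 *m A1) t.
Proof.
elim: t => [|t IH] //; rewrite doubleS /win /= -/(win A1 A2 sigma3 0 t.*2) IH.
by rewrite /sigma3 /= !add0n odd_double /= mulmxA.
Qed.

Lemma good_of_conv1 (i0 : 'I_n) : conv_all_x0 A1 A2 sigma1 -> good A1.
Proof. by move/(conv_pcol i0) => [t]; rewrite win_s1; exists t. Qed.

Lemma good_of_conv2 (i0 : 'I_n) : conv_all_x0 A1 A2 sigma2 -> good A2.
Proof. by move/(conv_pcol i0) => [t]; rewrite win_s2; exists t. Qed.

Lemma good_of_conv3 (i0 : 'I_n) : conv_all_x0 A1 A2 sigma3 -> good (A2 *m A1).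
Proof.
move/(conv_pcol i0) => [t ht].
have [k hk] : exists k, pcol (win A1 A2 sigma3 0 k.*2).
  case/boolP: (odd t) => ot.
  - exists t.+1./2.
    have -> : (t.+1./2).*2 = t.+1.
      by rewrite -[in RHS](odd_double_half t.+1) /= ot /= add0n.
    exact: pcol_winS.
  - exists t./2.
    have -> : (t./2).*2 = t by rewrite -[in RHS](odd_double_half t) (negPf ot) add0n.
    exact: ht.
by exists k; rewrite -win_s3.
Qed.

End Extract2.
Section Delta.
Variables (R : realType) (n : nat) (A1 A2 : 'M[R]_n).
Hypotheses (s1 : stochastic A1) (s2 : stochastic A2).

Definition pos1 (X : 'M[R]_n) i j := if 0 < X i j then X i j else 1.
Definition delta := \big[Order.min/1]_(i < n) \big[Order.min/1]_(j < n)
   Order.min (pos1 A1 i j) (pos1 A2 i j).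

Lemma pos1_gt0 X i j : 0 < pos1 X i j.
Proof. by rewrite /pos1; case: ifP. Qed.

Lemma delta_gt0 : 0 < delta.
Proof.
apply/bigmin_gtP; split => // i _; apply/bigmin_gtP; split => // j _.
by rewrite lt_min !pos1_gt0.
Qed.

Lemma delta_le b i j : 0 < sel A1 A2 b i j -> delta <= sel A1 A2 b i j.
Proof.
move=> h; apply: (le_trans (bigmin_le _ i _)); apply: (le_trans (bigmin_le _ j _)).
case: b h => /= h; rewrite ge_min /pos1 h ?lexx ?orbT //.
Qed.

Lemma term_le_mul (X Y : 'M[R]_n) i k j : nonneg X -> nonneg Y ->
  X i k * Y k j <= (X *m Y) i j.
Proof.
move=> X0 Y0; rewrite mxE (bigD1 k) //= lerDl.
by apply: sumr_ge0 => l _; apply: mulr_ge0.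
Qed.

Lemma Mw_lb w i j : 0 < Mw A1 A2 w i j -> delta ^+ size w <= Mw A1 A2 w i j.
Proof.
elim: w i j => [|b w IH] i j /=; first by rewrite expr0 mxE; case: eqP; rewrite ?ltxx.
have nb := stoch_nonneg (sel_stoch s1 s2 b); have nw := stoch_nonneg (Mw_stoch s1 s2 w).
move=> /(pos_mul nb nw) [k [h1 h2]].
apply: le_trans (term_le_mul i k j nb nw); rewrite exprS.
apply: ler_pM; [exact: ltW delta_gt0 | exact: exprn_ge0 (ltW delta_gt0) | |].
- exact: delta_le.
- exact: IH.
Qed.

End Delta.
Section Conv.
Variables (R : realType) (m : nat).
Local Notation N := m.+1.

Lemma single_le (F : 'I_N -> R) j : (forall l, 0 <= F l) -> F j <= \sum_l F l.
Proof. by move=> F0; rewrite (bigD1 j) //= lerDl sumr_ge0. Qed.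

Lemma step (P : 'M[R]_N) (y : 'cV[R]_N) lo hi ee j : stochastic P ->
  (forall l, lo <= y l ord0 <= hi) -> 0 <= ee -> (forall i, ee <= P i j) ->
  forall i, lo + ee * (y j ord0 - lo) <= (P *m y) i ord0 /\
            (P *m y) i ord0 <= hi - ee * (hi - y j ord0).
Proof.
move=> [P0 P1] hy e0 hP i.
have k1 : (P *m y) i ord0 - lo = \sum_l P i l * (y l ord0 - lo).
  rewrite mxE; under [RHS]eq_bigr do rewrite mulrBr.
  by rewrite sumrB -mulr_suml P1 mul1r.
have k2 : hi - (P *m y) i ord0 = \sum_l P i l * (hi - y l ord0).
  rewrite mxE; under [RHS]eq_bigr do rewrite mulrBr.
  by rewrite sumrB -mulr_suml P1 mul1r.
have [lj hj] := andP (hy j).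
have l1 : ee * (y j ord0 - lo) <= (P *m y) i ord0 - lo.
  rewrite k1; apply: le_trans (single_le j _).
    by apply: ler_wpM2r; rewrite ?subr_ge0.
  by move=> l; have /andP[h _] := hy l; apply: mulr_ge0; rewrite ?subr_ge0.
have l2 : ee * (hi - y j ord0) <= hi - (P *m y) i ord0.
  rewrite k2; apply: le_trans (single_le j _).
    by apply: ler_wpM2r; rewrite ?subr_ge0.
  by move=> l; have /andP[_ h] := hy l; apply: mulr_ge0; rewrite ?subr_ge0.
split.
- by rewrite -lerBrDl.
- by rewrite lerBrDl addrC -lerBrDl.
Qed.

End Conv.
Section Conv2.
Variables (R : realType) (m : nat).
Local Notation N := m.+1.

Lemma conv_main (x : nat -> 'cV[R]_N) (S : nat -> 'M[R]_N) K (eps : R) :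
  0 < eps -> (forall t, stochastic (S t)) -> (forall t, x t.+1 = S t *m x t) ->
  (forall s, exists P, [/\ stochastic P, x (s + K)%N = P *m x s &
                          exists j, forall i, eps <= P i j]) ->
  exists c : R, forall i, (fun t => x t i ord0) @ \oo --> (c : R^o).
Proof.
move=> e0 sS hx hw.
pose v t i := x t i ord0.
pose mx t := \big[Order.max/v t ord0]_i v t i.
pose mn t := \big[Order.min/v t ord0]_i v t i.
have mxP t i : v t i <= mx t by exact: le_bigmax.
have mnP t i : mn t <= v t i by exact: bigmin_le.
have mnmx t : mn t <= mx t := le_trans (mnP t ord0) (mxP t ord0).
have mx_le P t s : stochastic P -> x s = P *m x t -> mx s <= mx t /\ mn t <= mn s.
  move=> sP E.
  have hb i : mn t <= v s i <= mx t.
    move: i => i; have := @step R m P (x t) (mn t) (mx t) 0 ord0 sP _ (lexx 0) _ i.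
    rewrite !mul0r subr0 addr0 /v E => -[] //.
    - by move=> l; rewrite mnP mxP.
    - by move=> i'; case: sP => + _; apply.
    by move=> -> ->.
  split.
  - by apply/bigmax_leP; split => [|i _]; [have /andP[] := hb ord0 | have /andP[] := hb i].
  - by apply/bigmin_geP; split => [|i _]; [have /andP[] := hb ord0 | have /andP[] := hb i].
have mono t s : (t <= s)%N -> mx s <= mx t /\ mn t <= mn s.
  move=> /subnK <-; elim: (s - t)%N => [|d [IH1 IH2]]; first by rewrite add0n.
  have [h1 h2] := mx_le _ _ _ (sS (d + t)%N) (hx (d + t)%N).
  by split; [exact: le_trans h1 IH1 | exact: le_trans IH2 h2].
have contr s : mx (s + K)%N - mn (s + K)%N <= (1 - eps) * (mx s - mn s).
  have [P [sP E [j hj]]] := hw s.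
  have hb i := @step R m P (x s) (mn s) (mx s) eps j sP
     (fun l => introT andP (conj (mnP s l) (mxP s l))) (ltW e0) hj i.
  have u1 : mx (s + K)%N <= mx s - eps * (mx s - v s j).
    apply/bigmax_leP; split => [|i _]; rewrite /v E; [by case: (hb ord0) | by case: (hb i)].
  have u2 : mn s + eps * (v s j - mn s) <= mn (s + K)%N.
    apply/bigmin_geP; split => [|i _]; rewrite /v E; [by case: (hb ord0) | by case: (hb i)].
  have -> : (1 - eps) * (mx s - mn s) =
     (mx s - eps * (mx s - v s j)) - (mn s + eps * (v s j - mn s)).
    by rewrite mulrBl mul1r mulrBr mulrBr mulrBr; ring.
  exact: lerB.
have eps1 : eps <= 1.
  have [P [[P0 P1] _ [j hj]]] := hw 0%N.
  apply: le_trans (hj ord0) _; rewrite -(P1 ord0); exact: single_le.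
have q0 : 0 <= 1 - eps by rewrite subr_ge0.
have geo k : mx (k * K)%N - mn (k * K)%N <= (1 - eps) ^+ k * (mx 0%N - mn 0%N).
  elim: k => [|k IH]; first by rewrite mul0n expr0 mul1r.
  rewrite mulSn addnC exprS -mulrA; apply: le_trans (contr _) _.
  exact: ler_wpM2l.
have sp0 : (fun t => mx t - mn t) @ \oo --> (0 : R).
  apply/cvgrPdist_lt => e he.
  have q1 : `|1 - eps| < 1 by rewrite ger0_norm // ltrBlDr ltrDl.
  set D := mx 0%N - mn 0%N.
  have D0 : 0 <= D by rewrite subr_ge0.
  have hq : \forall k \near \oo, (1 - eps) ^+ k < e / (D + 1).
    have hc : (fun k => (1 - eps) ^+ k) @ \oo --> (0:R) := cvg_expr q1.
    apply: (cvgr_lt _ hc); apply: divr_gt0 => //.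
    by apply: ltr_wpDl.
  case/filter_ex: hq => k hk.
  apply: filterS (nbhs_infty_ge (k * K)) => t ht.
  rewrite sub0r normrN ger0_norm ?subr_ge0 //.
  have [h1 h2] := mono _ _ ht.
  apply: (@le_lt_trans _ _ (mx (k * K)%N - mn (k * K)%N)); first exact: lerB.
  apply: le_lt_trans (geo k) _.
  have D1 : 0 < D + 1 by apply: ltr_wpDl.
  apply: (@le_lt_trans _ _ ((1 - eps) ^+ k * (D + 1))).
    by apply: ler_wpM2l; [exact: exprn_ge0 | rewrite lerDl].
  by rewrite -ltr_pdivlMr.
have mn_cvg : mn @ \oo --> sup (range mn).
  apply: nondecreasing_cvgn.
    by move=> a b ab; have [] := mono _ _ ab.
  exists (mx 0%N) => _ [t _ <-].
  by apply: le_trans (mnmx t) _; have [] := mono 0%N t isT.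
exists (sup (range mn)) => i.
have -> : (fun t => x t i ord0) = (fun t => mn t + (v t i - mn t)).
  by apply: funext => t; rewrite addrC subrK.
rewrite -[X in _ --> X]addr0.
apply: cvgD => //.
apply: (@squeeze_cvgr _ _ _ _ (cst 0) (fun t => mx t - mn t)); last first.
- exact: sp0.
- exact: cvg_cst.
apply: nearW => t; rewrite subr_ge0 mnP /=.
by apply: lerB.
Qed.

End Conv2.
Lemma size_mkword sigma s L :
  size (mkword sigma s L) = L.
Proof. by elim: L => //= L ->. Qed.

Theorem proposition2 (R : realType) (n : nat) (A1 A2 : 'M[R]_n) :
  stochastic A1 -> stochastic A2 -> undirected A1 -> undirected A2 ->
  ((forall sigma : nat -> bool, conv_all_x0 A1 A2 sigma) <->
   (conv_all_x0 A1 A2 sigma1 /\ conv_all_x0 A1 A2 sigma2 /\ conv_all_x0 A1 A2 sigma3)).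
Proof.
move=> s1 s2 u1 u2; split.
  by move=> H; split; [exact: H | split; exact: H].
case=> h1 [h2 h3] sigma x0.
case: n A1 A2 s1 s2 u1 u2 h1 h2 h3 x0 => [|m] A1 A2 s1 s2 u1 u2 h1 h2 h3 x0.
  by exists 0 => -[].
have g1 := good_of_conv1 s1 s2 ord0 h1.
have g2 := good_of_conv2 s1 s2 ord0 h2.
have g3 := good_of_conv3 s1 s2 ord0 h3.
pose K := #|{: 'M[bool]_m.+1}|.
apply: (@conv_main R m _ (fun t => sel A1 A2 (sigma t)) K (delta A1 A2 ^+ K)).
- exact: exprn_gt0 (delta_gt0 A1 A2).
- by move=> t; apply: sel_stoch.
- by [].
move=> s; exists (win A1 A2 sigma s K); split.
- exact: Mw_stoch.
- exact: traj_win.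
have [j hj] := win_pcol s1 s2 u1 u2 g1 g2 g3 sigma s.
exists j => i; have := Mw_lb s1 s2 (hj i).
by rewrite size_mkword.
Qed.
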